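(* Let $B=(b_{ij})$ be an $n\times n$ integer matrix and let $d_1,\dots,d_n$ be integers such that $b_{ij}d_j=-b_{ji}d_i$ for all $i,j$. Fix $k\in\{1,\dots,n\}$ and assume every entry $b_{kj}$ ($j=1,\dots,n$) of the $k$-th row of $B$ is divisible by $d_k$. Let $l\in\{1,\dots,n\}$ and let $B'=\mu_l(B)$ be the matrix mutation of $B$ in direction $l$. Then every entry $b'_{kj}$ of the $k$-th row of $B'$ is divisible by $d_k$.
   Context: Matrix mutation in direction $l$: $B'=\mu_l(B)$ has entries $b'_{ij}=-b_{ij}$ if $i=l$ or $j=l$, and $b'_{ij}=b_{ij}+\frac{|b_{il}|b_{lj}+b_{il}|b_{lj}|}{2}$ otherwise. *)

(* Defs.v *)
From mathcomp Require Import all_boot all_order all_algebra.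
Set Implicit Arguments. Unset Strict Implicit. Unset Printing Implicit Defensive.
Import Order.TTheory GRing.Theory Num.Theory.
Local Open Scope ring_scope.

(* The numerator |b_il| b_lj + b_il |b_lj| is always even, so the integer
   division (divz) is exact. *)
Definition mutate (n : nat) (l : 'I_n) (B : 'M[int]_n) : 'M[int]_n :=
  \matrix_(i < n, j < n)
    if (i == l) || (j == l) then - B i j
    else B i j + ((`|B i l| * B l j + B i l * `|B l j|) %/ 2)%Z.

(* Main.v *)
Require Import Defs.
From mathcomp Require Import all_boot all_order all_algebra.
Import Order.TTheory GRing.Theory Num.Theory.
Local Open Scope ring_scope.

Lemma aux (a b e : int) : (e %| a)%Z -> (e %| (`|a| * b + a * `|b|) %/ 2)%Z.
Proof.
move=> ea.
have H2 : (2 : int) != 0 by [].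
have key : forall c : int, ((c *+ 2) %/ 2)%Z = c by move=> c; rewrite -[c *+ 2]mulr_natr mulzK.
have [a0|a0] := lerP 0 a; have [b0|b0] := lerP 0 b.
- rewrite (ger0_norm a0) (ger0_norm b0) -(mulrC b a) -mulr2n key.
  exact: (dvdz_mull _ ea).
- rewrite (ger0_norm a0) (ltr0_norm b0) mulrN subrr div0z.
  exact: dvdz0.
- rewrite (ltr0_norm a0) (ger0_norm b0) mulNr addNr div0z.
  exact: dvdz0.
- rewrite (ltr0_norm a0) (ltr0_norm b0) mulNr mulrN -opprD
    -mulr2n -mulNrn key.
  rewrite rpredN; exact: (dvdz_mulr _ ea).
Qed.

Theorem mainTheorem1 (n : nat) (B : 'M[int]_n) (d : 'I_n -> int)
  (skew : forall i j : 'I_n, B i j * d j = - (B j i * d i))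
  (k : 'I_n) (hk : forall j : 'I_n, (d k %| B k j)%Z)
  (l : 'I_n) :
  forall j : 'I_n, (d k %| mutate l B k j)%Z.
Proof.
move=> j; rewrite /mutate mxE.
case: ifP => _.
  by rewrite rpredN.
by rewrite rpredD // aux.
Qed.
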